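(* Let $(X,d)$ be a compact doubling metric space with $\operatorname{diam}(X,d)=1/2$ and $\mathcal S$ a hyperbolic filling with parameters $a\ge\lambda\ge6$. Let $\rho:\mathcal S\to(0,\infty)$ satisfy (H1) and (H4) (with exponent $p$), and let $C\ge\eta_-^{-p}$. Let $k\ge0$ and let $\mu_k$ be a $(C,\pi)$-balanced probability mass function on $\mathcal S_k$. Then there exists a probability mass function $\mu_{k+1}$ on $\mathcal S_{k+1}$ such that: (1) the pair $(\mu_k,\mu_{k+1})$ is $(C,\pi)$-compatible; (2) $\mu_{k+1}$ is $(C,\pi)$-balanced; (3) there is a probability measure $\mu_{k,k+1}$ on $X\times X$ whose marginals (pushforwards under the two coordinate projections) are $\tilde\mu_k=\sum_{u\in\mathcal S_k}\mu_k(u)\delta_{\pi_1(u)}$ and $\tilde\mu_{k+1}=\sum_{v\in\mathcal S_{k+1}}\mu_{k+1}(v)\delta_{\pi_1(v)}$, and such that $\mu_{k,k+1}(\{(x_1,x_2)\in X\times X:d(x_1,x_2)\ge(1+2\lambda a^{-1})a^{-k}\})=0$.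
   Context: Hyperbolic filling: $X_0\subset X_1\subset\cdots$ increasing, $X_n$ maximal $a^{-n}$-separated in $X$ ($X_0=\{x_0\}$); $\mathcal S_n=\{(x,n):x\in X_n\}$, $\mathcal S=\bigcup_n\mathcal S_n$, $\pi_1(x,n)=x$, $v_0=(x_0,0)$. Each $(x,n)$, $n\ge1$, has a fixed parent $(y,n-1)$ with $d(x,y)=\min_{z\in X_{n-1}}d(x,z)$; descendants iterate the child relation; $\mathcal D_n(v)$ = descendants of $v$ in $\mathcal S_n$; genealogy $g(v)=(v_0,\dots,v_k=v)$ with $v_i$ parent of $v_{i+1}$. $D_2$: graph distance for the graph with edges vertex–parent and horizontal edges between distinct $(x,n),(y,n)$ with $B(x,\lambda a^{-n})\cap B(y,\lambda a^{-n})\ne\emptyset$. $\delta_x$ is the Dirac mass at $x$. $\pi(v)=\prod_{w\in g(v)}\rho(w)$. (H1) $0<\eta_-\le\rho\le\eta_+<1$. (H4) $\sum_{w\in\mathcal D_n(v)}\pi(w)^p\le\pi(v)^p$ for all $v\in\mathcal S_m$, $n>m$. A function $f:\mathcal S_k\to(0,\infty)$ is $(C,\pi)$-balanced if $f(u)/\pi(u)^p\le C^2f(v)/\pi(v)^p$ for all $u,v\in\mathcal S_k$ with $D_2(u,v)=1$. A pair $f_0:\mathcal S_k\to(0,\infty)$, $f_1:\mathcal S_{k+1}\to(0,\infty)$ is $(C,\pi)$-compatible if $f_0(u)/\pi(u)^p\le f_1(v)/\pi(v)^p\le Cf_0(u)/\pi(u)^p$ whenever $u\in\mathcal S_k$ is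 the parent of $v\in\mathcal S_{k+1}$. *)

(* Defs.v *)
From HB Require Import structures.
From mathcomp Require Import all_boot all_order all_algebra.
From mathcomp Require Import reals exp.
From Stdlib Require List.
Set Implicit Arguments. Unset Strict Implicit. Unset Printing Implicit Defensive.
Import Order.TTheory GRing.Theory Num.Theory.
Local Open Scope ring_scope.

Section HF.
Variables (R : realType) (X : eqType) (d : X -> X -> R).

Definition is_metric : Prop :=
  [/\ forall x y, 0 <= d x y,
      forall x y, d x y = 0 <-> x = y,
      forall x y, d x y = d y x &
      forall x y z, d x z <= d x y + d y z].

Definition d_open (U : X -> Prop) : Prop :=
  forall x, U x -> exists2 e : R, 0 < e & forall y, d x y < e -> U y.

Definition d_compact : Prop :=
  forall (I : Type) (U : I -> X -> Prop),
    (forall i, d_open (U i)) -> (forall x, exists i, U i x) ->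
    exists s : seq I, forall x, exists2 i, Stdlib.Lists.List.In i s & U i x.

Definition d_doubling : Prop :=
  exists N : nat, forall (x : X) (r : R), 0 < r ->
    exists s : seq X, (size s <= N)%N /\
      forall y, d x y < r -> exists2 z, z \in s & d z y < r / 2.

Definition diam_eq (D : R) : Prop :=
  (forall x y, d x y <= D) /\
  (forall e : R, 0 < e -> exists x y, D - e < d x y).

Definition separated (A : X -> Prop) (r : R) : Prop :=
  forall x y, A x -> A y -> x <> y -> r <= d x y.

Definition maximal_separated (A : X -> Prop) (r : R) : Prop :=
  separated A r /\
  forall B : X -> Prop, (forall x, A x -> B x) -> separated B r ->
    forall x, B x -> A x.

(* Hyperbolic filling data.  The level-n vertex set S_n = {(x,n) : x in X_n}
   is encoded by the duplicate-free list Xs n (= X_n); the parent of the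
   vertex (x,n), n >= 1, is (parent x n, n-1). *)
Definition hyperbolic_filling (a : R) (x0 : X) (Xs : nat -> seq X)
  (parent : X -> nat -> X) : Prop :=
  [/\ Xs 0%N = [:: x0],
      forall n, uniq (Xs n),
      forall n, {subset Xs n <= Xs n.+1},
      forall n, maximal_separated (fun x => x \in Xs n) (a ^- n) &
      forall n x, x \in Xs n.+1 ->
        parent x n.+1 \in Xs n /\
        forall z, z \in Xs n -> d x (parent x n.+1) <= d x z].

Fixpoint anc (parent : X -> nat -> X) (x : X) (n j : nat) : X :=
  match j with
  | 0%N => x
  | j'.+1 => anc parent (parent x n) n.-1 j'
  end.

Definition descendant (parent : X -> nat -> X) (w : X) (n : nat) (y : X)
  (m : nat) : bool :=
  (m < n)%N && (anc parent w n (n - m) == y).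

Fixpoint pi_ (parent : X -> nat -> X) (rho : X -> nat -> R) (x : X) (n : nat)
  : R :=
  match n with
  | 0%N => rho x 0%N
  | n'.+1 => rho x n * pi_ parent rho (parent x n) n'
  end.

Definition balls_meet (lam a : R) (x y : X) (n : nat) : Prop :=
  exists z, d x z < lam * a ^- n /\ d y z < lam * a ^- n.

Definition D2_edge (Xs : nat -> seq X) (parent : X -> nat -> X) (lam a : R)
  (u : X * nat) (v : X * nat) : Prop :=
  [/\ u.1 \in Xs u.2, v.1 \in Xs v.2 &
   [\/ v.2 = u.2.+1 /\ parent v.1 v.2 = u.1,
       u.2 = v.2.+1 /\ parent u.1 u.2 = v.1 |
       [/\ u.2 = v.2, u.1 <> v.1 & balls_meet lam a u.1 v.1 u.2]]].

(* D_2(u,v) = 1 : graph distance one, i.e. u <> v adjacent *)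
Definition D2_eq1 (Xs : nat -> seq X) (parent : X -> nat -> X) (lam a : R) (u v : X * nat) : Prop :=
  u <> v /\ D2_edge Xs parent lam a u v.

Definition pos_pmf (Xs : nat -> seq X) (k : nat) (f : X -> R) : Prop :=
  (forall x, x \in Xs k -> 0 < f x) /\ \sum_(x <- Xs k) f x = 1.

Definition balanced (Xs : nat -> seq X) (parent : X -> nat -> X)
  (rho : X -> nat -> R) (lam a p C : R) (k : nat) (f : X -> R)
  : Prop :=
  (forall x, x \in Xs k -> 0 < f x) /\
  forall u v, u \in Xs k -> v \in Xs k ->
    D2_eq1 Xs parent lam a (u, k) (v, k) ->
    f u / powR (pi_ parent rho u k) p <=
      C ^+ 2 * (f v / powR (pi_ parent rho v k) p).

Definition compatible (Xs : nat -> seq X) (parent : X -> nat -> X)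
  (rho : X -> nat -> R) (p C : R) (k : nat) (f0 f1 : X -> R)
  : Prop :=
  [/\ forall x, x \in Xs k -> 0 < f0 x,
      forall x, x \in Xs k.+1 -> 0 < f1 x &
      forall v, v \in Xs k.+1 ->
        let u := parent v k.+1 in
        f0 u / powR (pi_ parent rho u k) p <=
          f1 v / powR (pi_ parent rho v k.+1) p <=
          C * (f0 u / powR (pi_ parent rho u k) p)].

(* A probability measure on X x X supported on finitely many atoms:
   gamma x y is the mass of the atom (x,y). *)
Definition coupling_near (Xs : nat -> seq X) (k : nat) (mu0 mu1 : X -> R)
  (bound : R) (gamma : X -> X -> R) : Prop :=
  [/\ forall x y, 0 <= gamma x y,
      forall x y, gamma x y != 0 -> x \in Xs k /\ y \in Xs k.+1,
      forall x, x \in Xs k -> \sum_(y <- Xs k.+1) gamma x y = mu0 x,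
      forall y, y \in Xs k.+1 -> \sum_(x <- Xs k) gamma x y = mu1 y &
      forall x y, gamma x y != 0 -> d x y < bound].

End HF.

(* Main.v *)
Require Import Defs.
From HB Require Import structures.
From mathcomp Require Import all_boot all_order all_algebra.
From mathcomp Require Import reals exp.
From mathcomp Require Import boolp classical_sets topology normedtype.
From mathcomp Require Import ring lra.
Import Order.TTheory GRing.Theory Num.Theory numFieldNormedType.Exports.
Local Open Scope ring_scope.

Section IVTpart.
Variable R : realType.
Local Open Scope classical_set_scope.
Lemma cont_hinge (c k q : R) : continuous (fun l : R => Num.max 0 (l * c - k) * q).
Proof.
move=> x.
apply: cvgM; last exact: cvg_cst.
have -> : (fun l : R => Num.max 0 (l * c - k)) = (fun l : R => (0 + (l * c - k) + `|0 - (l * c - k)|) / 2).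
  by apply: funext => l; rewrite maxr_absE.
have hc : (fun l : R => l * c - k) @ x --> (x * c - k).
  apply: cvgB; last exact: cvg_cst.
  by apply: cvgM; [exact: cvg_id | exact: cvg_cst].
rewrite [X in _ --> X]maxr_absE.
apply: cvgM; last exact: cvg_cst.
apply: cvgD; first by apply: cvgD; [exact: cvg_cst | exact: hc].
apply: cvg_norm; apply: cvgB; [exact: cvg_cst | exact: hc].
Qed.

Lemma cont_sum (T : Type) (s : seq T) (P : pred T) (h : T -> R -> R) :
  (forall z, continuous (h z)) ->
  continuous (fun l : R => \sum_(z <- s | P z) h z l).
Proof.
move=> hc; elim: s => [|y s IH].
  have -> : (fun l : R => \sum_(z <- [::] | P z) h z l) = (fun _ => 0).
    by apply: funext => l; rewrite big_nil.
  move=> x; exact: cvg_cst.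
have -> : (fun l : R => \sum_(z <- y :: s | P z) h z l) =
  (fun l : R => (if P y then h y l else 0) + \sum_(z <- s | P z) h z l).
  by apply: funext => l; rewrite big_cons; case: (P y); rewrite ?add0r.
move=> x; apply: cvgD; last exact: IH.
case: (P y); last exact: cvg_cst.
exact: hc.
Qed.

Lemma cont_hinge_sum (T : Type) (A c : R) (s : seq T) (P : pred T) (K Q : T -> R) :
  continuous (fun l : R => l * A + \sum_(y <- s | P y) Num.max 0 (l * c - K y) * Q y).
Proof.
move=> x.
apply: cvgD.
  by apply: cvgM; [exact: cvg_id | exact: cvg_cst].
apply: (@cont_sum _ s P (fun y l => Num.max 0 (l * c - K y) * Q y)).
move=> z; exact: cont_hinge.
Qed.

Lemma ivt_hinge (T : Type) (A c : R) (s : seq T) (P : pred T) (K Q : T -> R) (lo hi M : R) :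
  lo <= hi ->
  lo * A + \sum_(y <- s | P y) Num.max 0 (lo * c - K y) * Q y <= M ->
  M <= hi * A + \sum_(y <- s | P y) Num.max 0 (hi * c - K y) * Q y ->
  exists2 l, lo <= l <= hi &
    l * A + \sum_(y <- s | P y) Num.max 0 (l * c - K y) * Q y = M.
Proof.
move=> lohi h1 h2.
have := @IVT R (fun l : R => l * A + \sum_(y <- s | P y) Num.max 0 (l * c - K y) * Q y) lo hi M lohi.
case.
- apply: continuous_subspaceT => x; exact: cont_hinge_sum.
- apply/andP; split.
    by rewrite ge_min h1.
  by rewrite le_max h2 orbT.
move=> l; rewrite in_itv /= => hl e; by exists l.
Qed.
End IVTpart.

Definition mle {R : realType} {T : Type} (m : T -> R) : rel T := fun a b => (m a <= m b)%R.

Section Gen.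
Variable R : realType.

Lemma bigmax_le (T : eqType) (s : seq T) (P : pred T) (F : T -> R) (x : R) :
  0 <= x -> (forall z, z \in s -> P z -> F z <= x) ->
  \big[Num.max/0]_(z <- s | P z) F z <= x.
Proof.
move=> x0; elim: s => [|y s IH] hF; first by rewrite big_nil.
rewrite big_cons; case: ifP => Py.
  rewrite ge_max hF ?inE ?eqxx //= IH // => z zs Pz; apply: hF => //.
  by rewrite inE zs orbT.
by apply: IH => z zs Pz; apply: hF => //; rewrite inE zs orbT.
Qed.

Lemma sum_ge_term (T : eqType) (s : seq T) (P : pred T) (F : T -> R) u :
  u \in s -> P u -> (forall y, P y -> 0 <= F y) -> F u <= \sum_(y <- s | P y) F y.
Proof.
move=> us Pu F0; elim: s us => [|y s IH] //; rewrite inE big_cons => /orP [/eqP eq|us].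
  by rewrite -eq Pu lerDl sumr_ge0.
case: ifP => Py; last exact: IH.
by apply: ler_wpDl; [exact: F0 | exact: IH].
Qed.

Lemma sum_pick (T : eqType) (s : seq T) (F : T -> R) z :
  uniq s -> z \in s -> \sum_(x <- s) (z == x)%:R * F x = F z.
Proof.
move=> us zs; rewrite (bigD1_seq z) //= eqxx mul1r big1 ?addr0 // => x.
by rewrite eq_sym => /negbTE ->; rewrite mul0r.
Qed.

Lemma sort_index (T : eqType) (m : T -> R) (s : seq T) x y :
  x \in s -> y \in s -> m x < m y ->
  (index x (sort (mle m) s) < index y (sort (mle m) s))%N.
Proof.
move=> xs ys mxy.
have xL : x \in sort (mle m) s by rewrite mem_sort.
have yL : y \in sort (mle m) s by rewrite mem_sort.
have srt : sorted (mle m) (sort (mle m) s).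
  by apply: sort_sorted => a b; exact: le_total.
rewrite ltnNge; apply/negP => hyx.
have := @sorted_leq_nth _ (mle m)
  (fun b a c (h1 : mle m a b) (h2 : mle m b c) => le_trans h1 h2) (fun a => lexx (m a)) x _ srt
  (index y (sort (mle m) s)) (index x (sort (mle m) s)).
rewrite !inE !index_mem xL yL !nth_index // => /(_ isT isT hyx) hle.
by move: mxy; rewrite ltNge (hle : m y <= m x).
Qed.

Lemma le_bigmax (T : eqType) (s : seq T) (P : pred T) (F : T -> R) (z : T) :
  z \in s -> P z -> F z <= \big[Num.max/0]_(y <- s | P y) F y.
Proof.
elim: s => [|y s IH] //; rewrite inE big_cons => /orP [/eqP <- ->|zs Pz].
  by rewrite le_max lexx.
case: ifP => _; last exact: IH.
by rewrite le_max IH // orbT.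
Qed.

Lemma bigmax_ge0 (T : Type) (s : seq T) (P : pred T) (F : T -> R) :
  0 <= \big[Num.max/0]_(z <- s | P z) F z.
Proof.
elim: s => [|y s IH]; first by rewrite big_nil.
by rewrite big_cons; case: ifP => // _; rewrite le_max IH orbT.
Qed.

Lemma telescope (T : eqType) (s : seq T) (P : pred T) (a : T -> R) (a0 : R) :
  uniq s -> 0 <= a0 ->
  \sum_(i <- s | P i) Num.max 0 (a i - Num.max a0
      (\big[Num.max/0]_(z <- s | P z && (index z s < index i s)%N) a z))
  = Num.max a0 (\big[Num.max/0]_(z <- s | P z) a z) - a0.
Proof.
elim: s a0 => [|x s IH] a0 /=.
  by move=> _ h0; rewrite !big_nil (max_idPl h0) subrr.
move=> /andP [xs us] h0.
have eqin : forall i, i \in s ->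
   \big[Num.max/0]_(z <- x :: s | P z && (index z (x :: s) < index i (x :: s))%N) a z =
   if P x then Num.max (a x) (\big[Num.max/0]_(z <- s | P z && (index z s < index i s)%N) a z)
   else \big[Num.max/0]_(z <- s | P z && (index z s < index i s)%N) a z.
  move=> i is_; rewrite big_cons.
  have ix : (x == i) = false by apply/negbTE; apply/eqP => e; rewrite e is_ in xs.
  have -> : \big[Num.max/0]_(z <- s | P z && (index z (x :: s) < index i (x :: s))%N) a z =
            \big[Num.max/0]_(z <- s | P z && (index z s < index i s)%N) a z.
    rewrite big_seq_cond [RHS]big_seq_cond; apply: eq_bigl => z /=.
    case zs: (z \in s) => //=.
    have -> : (x == z) = false by apply/negbTE; apply/eqP => e; rewrite e zs in xs.
    by rewrite ix.
  by rewrite /= eqxx ix /= andbT.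
rewrite big_cons /= eqxx /=.
have -> : \big[Num.max/0]_(z <- x :: s | P z && (0 < 0)%N) a z = 0.
  by elim: (x :: s) => [|y t IHt]; rewrite ?big_nil // big_cons andbF.
rewrite (max_idPl h0).
set a0' := if P x then Num.max a0 (a x) else a0.
have h0' : 0 <= a0' by rewrite /a0'; case: (P x); rewrite ?le_max ?h0.
have -> : \sum_(i <- s | P i) Num.max 0 (a i - Num.max a0
      (\big[Num.max/0]_(z <- x :: s | P z && (index z (x :: s) < index i (x :: s))%N) a z))
  = \sum_(i <- s | P i) Num.max 0 (a i - Num.max a0'
      (\big[Num.max/0]_(z <- s | P z && (index z s < index i s)%N) a z)).
  rewrite big_seq_cond [RHS]big_seq_cond; apply: eq_bigr => i /andP [is_ _].
  rewrite eqin // /a0'; case: (P x) => //.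
  by rewrite maxA.
rewrite IH // big_cons /a0'.
case: (P x); last by rewrite ?add0r.
rewrite maxA.
have -> : Num.max 0 (a x - a0) = Num.max a0 (a x) - a0.
  case: (leP a0 (a x)) => h.
    by apply/max_idPr; rewrite subr_ge0.
  rewrite subrr; apply/max_idPl; rewrite subr_le0; exact: ltW.
by rewrite addrC addrA subrK.
Qed.

Lemma arA (C fz mz mpw : R) : 0 < C -> fz <= C * mz -> mz <= C ^+ 2 * mpw ->
  fz / C ^+ 2 <= C * mpw.
Proof.
move=> hC h1 h2; rewrite ler_pdivrMr ?exprn_gt0 //; apply: le_trans h1 _.
have h3 : C * mz <= C * (C ^+ 2 * mpw) by apply: ler_wpM2l => //; exact: ltW.
apply: le_trans h3 _; rewrite mulrCA [C * mpw * _]mulrC.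
by [].
Qed.

Lemma arB (C fz mz mpw rw : R) : 1 <= C -> fz <= C * mz -> mz <= C ^+ 2 * mpw ->
  0 <= mpw -> mpw <= rw -> fz / C ^+ 2 <= C ^+ 2 * rw.
Proof.
move=> hC h1 h2 h3 h4.
have hC0 : 0 < C by apply: lt_le_trans ltr01 hC.
apply: le_trans (arA _ _ _ _ hC0 h1 h2) _.
have hCC : C <= C ^+ 2 by rewrite expr2 ler_peMl // ltW.
have h5 : C * mpw <= C ^+ 2 * mpw by apply: ler_wpM2r.
apply: le_trans h5 _.
by apply: ler_wpM2l => //; rewrite exprn_ge0 // ltW.
Qed.

End Gen.

Section Main.
Variables (R : realType) (X : eqType) (d : X -> X -> R)
  (a lam : R) (x0 : X) (Xs : nat -> seq X) (parent : X -> nat -> X)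
  (rho : X -> nat -> R) (eta_m eta_p p C : R) (k : nat) (mu_k : X -> R).
Hypothesis Hmet : is_metric d.
Hypothesis Hlam6 : 6 <= lam.
Hypothesis Hlama : lam <= a.
Hypothesis Hhf : hyperbolic_filling d a x0 Xs parent.
Hypothesis Hrho : forall n x, x \in Xs n -> 0 < rho x n.
Hypothesis Hem : 0 < eta_m.
Hypothesis Hep1 : eta_p < 1.
Hypothesis Hbnd : forall n x, x \in Xs n -> eta_m <= rho x n <= eta_p.
Hypothesis H4 : forall m n y, (m < n)%N -> y \in Xs m ->
     \sum_(w <- Xs n | descendant parent w n y m)
        powR (pi_ parent rho w n) p <= powR (pi_ parent rho y m) p.
Hypothesis HC : powR eta_m (- p) <= C.
Hypothesis Hpmf : pos_pmf Xs k mu_k.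
Hypothesis Hbal : balanced d Xs parent rho lam a p C k mu_k.

Lemma dge0 x y : 0 <= d x y. Proof. by case: Hmet => h _ _ _; exact: h. Qed.
Lemma dxx x : d x x = 0. Proof. by case: Hmet => _ h _ _; apply/h. Qed.
Lemma deq0 x y : d x y = 0 -> x = y. Proof. by case: Hmet => _ h _ _; move/h. Qed.
Lemma dsym x y : d x y = d y x. Proof. by case: Hmet => _ _ h _; exact: h. Qed.
Lemma dtri x y z : d x z <= d x y + d y z. Proof. by case: Hmet => _ _ _ h; exact: h. Qed.

Lemma Huniq n : uniq (Xs n). Proof. by case: Hhf => _ h _ _ _; exact: h. Qed.
Lemma Hsub n : {subset Xs n <= Xs n.+1}. Proof. by case: Hhf => _ _ h _ _; exact: h. Qed.
Lemma Hmaxs n : maximal_separated d (fun x => x \in Xs n) (a ^- n).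
Proof. by case: Hhf => _ _ _ h _; exact: h. Qed.
Lemma Hparf n x : x \in Xs n.+1 -> parent x n.+1 \in Xs n /\
        forall z, z \in Xs n -> d x (parent x n.+1) <= d x z.
Proof. by case: Hhf => _ _ _ _ h; exact: h. Qed.
Arguments Hparf {n x}.
Arguments Hsub {n}.

Lemma lam_gt0 : 0 < lam. Proof. have := Hlam6; lra. Qed.
Lemma a_gt0 : 0 < a. Proof. have := Hlam6; have := Hlama; lra. Qed.

Let e := a ^- k.
Lemma e_gt0 : 0 < e. Proof. by rewrite /e invr_gt0 exprn_gt0 // a_gt0. Qed.
Let t := lam / a.
Lemma t_le1 : t <= 1. Proof. by rewrite /t ler_pdivrMr ?a_gt0 // mul1r. Qed.
Lemma t_gt0 : 0 < t. Proof. by rewrite /t divr_gt0 ?a_gt0 ?lam_gt0. Qed.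
Lemma lam_e1 : lam * a ^- k.+1 = t * e.
Proof.
by rewrite /t /e exprSr invfM; ring.
Qed.

Let Bd := (1 + 2 * lam / a) * a ^- k.
Lemma Bd_eq : Bd = e + 2 * (t * e).
Proof. by rewrite /Bd /e /t mulrDl mul1r -!mulrA. Qed.

Let par w := parent w k.+1.

Lemma near_parent w : w \in Xs k.+1 -> par w \in Xs k /\ d w (par w) < e.
Proof.
move=> hw; have [hin hmin] := Hparf hw; split => //.
have [z zin dz] : exists2 z, z \in Xs k & d w z < e.
  case: (boolP (has (fun z => d w z < e) (Xs k))) => [/hasP [z zin dz] | /hasPn hn].
    by exists z.
  exfalso; have [hsep hmaxl] := Hmaxs k.
  have sepB : Defs.separated d (fun x => x \in Xs k \/ x = w) (a ^- k).
    move=> x y [xi|->] [yi|->] nxy.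
    - exact: hsep.
    - by rewrite dsym leNgt; exact: hn.
    - by rewrite leNgt; exact: hn.
    - by case: nxy.
  have wi := hmaxl _ (fun x hx => or_introl hx) sepB w (or_intror erefl).
  by have := hn w wi; rewrite /= dxx e_gt0.
exact: le_lt_trans (hmin z zin) dz.
Qed.
Arguments near_parent {w}.

Lemma self_par u : u \in Xs k -> u \in Xs k.+1 /\ par u = u.
Proof.
move=> hu; have hu' := Hsub _ hu; split => //.
have [_ hmin] := Hparf hu'.
have := hmin u hu; rewrite dxx => h.
by apply/esym/deq0; apply/le_anti; rewrite h dge0.
Qed.
Arguments self_par {u}.

Lemma pi_pos n u : u \in Xs n -> 0 < pi_ parent rho u n.
Proof.
elim: n u => [|n IH] u hu /=; first exact: Hrho.
by rewrite mulr_gt0 ?Hrho // IH // (Hparf hu).1.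
Qed.
Arguments pi_pos {n u}.

Let P u := powR (pi_ parent rho u k) p.
Let Q w := powR (pi_ parent rho w k.+1) p.
Let m u := mu_k u / P u.

Lemma P_gt0 u : u \in Xs k -> 0 < P u.
Proof. by move=> hu; apply: powR_gt0; apply: pi_pos. Qed.
Arguments P_gt0 {u}.
Lemma Q_gt0 w : w \in Xs k.+1 -> 0 < Q w.
Proof. by move=> hu; apply: powR_gt0; apply: pi_pos. Qed.
Arguments Q_gt0 {w}.
Lemma Q_eq w : w \in Xs k.+1 -> Q w = rho w k.+1 `^ p * P (par w).
Proof.
move=> hw; rewrite /Q /P /par /= powRM //; first exact/ltW/Hrho.
exact/ltW/pi_pos/(Hparf hw).1.
Qed.
Arguments Q_eq {w}.

Let S u := \sum_(w <- Xs k.+1 | par w == u) Q w.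

Lemma S_le u : u \in Xs k -> S u <= P u.
Proof.
move=> hu; have := @H4 k k.+1 u (ltnSn k) hu.

have E : forall w, descendant parent w k.+1 u k = (par w == u).
  by move=> w; rewrite /descendant subSnn ltnSn.
by rewrite (eq_bigl _ _ E).
Qed.
Arguments S_le {u}.

Lemma ex_u0 : exists u, u \in Xs k.
Proof.
case: Hpmf => _; case: (Xs k) => [|u s]; last by exists u; rewrite inE eqxx.
by rewrite big_nil => /eqP; rewrite eq_sym oner_eq0.
Qed.

Lemma S_geQ u : u \in Xs k -> Q u <= S u.
Proof.
move=> hu; have [hu' pu] := self_par hu.
apply: (@sum_ge_term R X (Xs k.+1) (fun w => par w == u) Q u) => //; first by rewrite /= pu.
by move=> y _; exact: powR_ge0.
Qed.
Arguments S_geQ {u}.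

Lemma p_ge0 : 0 <= p.
Proof.
rewrite leNgt; apply/negP => hp.
have [u hu] := ex_u0; have [hu' pu] := self_par hu.
have hr := Hrho _ _ hu'; have [_ hr2] := andP (Hbnd _ _ hu').
have hr1 : rho u k.+1 < 1 by apply: le_lt_trans hr2 Hep1.
have hl : ln (rho u k.+1) < 0 by apply: ln_lt0; rewrite hr hr1.
have hpl : 0 < p * ln (rho u k.+1) by nra.
have g1 : 1 < rho u k.+1 `^ p.
  by rewrite /powR gt_eqF // expR_gt1.
have hP := P_gt0 hu.
have : P u < Q u by rewrite Q_eq // pu -[X in X < _]mul1r ltr_pM2r.
have := S_geQ hu; have := S_le hu => h1 h2 h3.
by have := lt_le_trans h3 (le_trans h2 h1); rewrite ltxx.
Qed.

Lemma C_gt0 : 0 < C.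
Proof. apply: lt_le_trans HC; exact: powR_gt0. Qed.

Lemma rhoC w : w \in Xs k.+1 -> 1 <= C * rho w k.+1 `^ p.
Proof.
move=> hw; have [h1 _] := andP (Hbnd _ _ hw).
have hx : 0 < eta_m `^ p by apply: powR_gt0.
have hle : eta_m `^ p <= rho w k.+1 `^ p.
  apply: (ge0_ler_powR p_ge0) => //; rewrite nnegrE ltW //.
  exact: lt_le_trans h1.
have h0 : (eta_m `^ p)^-1 <= C by rewrite -powRN.
have h : 1 <= C * eta_m `^ p.
  by rewrite -(mulVf (lt0r_neq0 hx)) ler_pM2r.
apply: le_trans h _; apply: ler_wpM2l => //; exact: ltW C_gt0.
Qed.
Arguments rhoC {w}.

Lemma PS u : u \in Xs k -> P u <= C * S u.
Proof.
move=> hu; have [hu' pu] := self_par hu.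
have hP := P_gt0 hu.
apply: le_trans (_ : C * Q u <= C * S u); last first.
  by apply: ler_wpM2l; [exact: ltW C_gt0 | exact: S_geQ].
rewrite Q_eq // pu mulrA -[X in X <= _]mul1r ler_pM2r //; exact: rhoC.
Qed.
Arguments PS {u}.

Lemma C_ge1 : 1 <= C.
Proof.
have [u hu] := ex_u0; have h1 := PS hu; have h2 := S_le hu; have hP := P_gt0 hu.
have hC := C_gt0; nra.
Qed.

Lemma m_gt0 u : u \in Xs k -> 0 < m u.
Proof. by move=> hu; rewrite /m divr_gt0 ?P_gt0 //; case: Hpmf => h _; exact: h. Qed.
Arguments m_gt0 {u}.

Lemma bal_near u v : u \in Xs k -> v \in Xs k -> d u v < lam * e -> m u <= C ^+ 2 * m v.
Proof.
move=> hu hv duv; case: (eqVneq u v) => [<-|nuv].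
  apply: ler_peMl; first exact/ltW/m_gt0.
  by rewrite expr_ge1 // ?C_ge1 // ltW // C_gt0.
case: Hbal => _ hb; apply: hb => //; split.
  by case=> E; rewrite E eqxx in nuv.
split => //; apply: Or33; split => //.
  by move=> /= E; rewrite E eqxx in nuv.
exists v; split => //; by rewrite dxx mulr_gt0 ?lam_gt0 ?e_gt0.
Qed.
Arguments bal_near {u v}.

Lemma pay_par z y : z \in Xs k -> y \in Xs k.+1 -> d z y < Bd -> m z <= C ^+ 2 * m (par y).
Proof.
move=> hz hy dzy; have [hpy dyp] := near_parent hy.
apply: bal_near => //.
apply: le_lt_trans (dtri z y (par y)) _.
have : Bd + e <= lam * e.
  rewrite Bd_eq; have := Hlam6; have := t_le1; have := e_gt0; nra.
apply: lt_le_trans; exact: ltrD.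
Qed.
Arguments pay_par {z y}.

Lemma chain1 v w : v \in Xs k.+1 -> w \in Xs k.+1 -> d v w < 2 * (t * e) -> d (par v) w < Bd.
Proof.
move=> hv hw dvw; have [_ dvp] := near_parent hv.
apply: le_lt_trans (dtri (par v) v w) _.
by rewrite Bd_eq dsym ltrD.
Qed.
Arguments chain1 {v w}.

Lemma chain2 z v w : z \in Xs k -> v \in Xs k.+1 -> w \in Xs k.+1 -> d z v < Bd ->
  d v w < 2 * (t * e) -> m z <= C ^+ 2 * m (par w).
Proof.
move=> hz hv hw dzv dvw; have [hpw dwp] := near_parent hw.
apply: bal_near => //.
apply: le_lt_trans (dtri z w (par w)) _.
apply: le_lt_trans (lerD (dtri z v w) (lexx _)) _.
have : Bd + 2 * (t * e) + e <= lam * e.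
  rewrite Bd_eq; have := Hlam6; have := t_le1; have := e_gt0; nra.
apply: lt_le_trans; by rewrite ltrD // ltrD.
Qed.
Arguments chain2 {z v w}.

Let L := sort (mle m) (Xs k).
Lemma uL : uniq L. Proof. by rewrite /L sort_uniq Huniq. Qed.
Lemma memL z : (z \in L) = (z \in Xs k). Proof. by rewrite /L mem_sort. Qed.

Let Pay z y := (C * m (par y) < m z) && (d z y < Bd).

Lemma Pay_lt z y : y \in Xs k.+1 -> Pay z y -> m (par y) < m z.
Proof.
move=> hy /andP [h _]; apply: le_lt_trans h.
have [hpy _] := near_parent hy.
apply: ler_peMl; [exact/ltW/m_gt0 | exact: C_ge1].
Qed.
Arguments Pay_lt {z y}.

Lemma Pay_before z y : z \in Xs k -> y \in Xs k.+1 -> Pay z y -> (index (par y) L < index z L)%N.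
Proof.
move=> hz hy hP; have [hpy _] := near_parent hy.
by apply: sort_index => //; apply: Pay_lt hP.
Qed.
Arguments Pay_before {z y}.

Let K (f : X -> R) u y := Num.max (f (par y))
   (\big[Num.max/0]_(z <- L | Pay z y && (index z L < index u L)%N) (f z / C ^+ 2)).

Let cost (f : X -> R) u l := l * S u +
   \sum_(y <- Xs k.+1 | Pay u y) Num.max 0 (l / C ^+ 2 - K f u y) * Q y.

Lemma cost_ext f g u l : u \in Xs k ->
  (forall z, z \in Xs k -> (index z L < index u L)%N -> f z = g z) ->
  cost f u l = cost g u l.
Proof.
move=> hu hfg; rewrite /cost; congr (_ + _).
rewrite big_seq_cond [RHS]big_seq_cond; apply: eq_bigr => y /andP [yin Py].
have [hpy _] := near_parent yin.
rewrite /K (hfg (par y)) //; last exact: Pay_before.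
have -> : \big[Num.max/0]_(z <- L | Pay z y && (index z L < index u L)%N) (f z / C ^+ 2) =
          \big[Num.max/0]_(z <- L | Pay z y && (index z L < index u L)%N) (g z / C ^+ 2).
  rewrite big_seq_cond [RHS]big_seq_cond; apply: eq_bigr => z /andP [zL /andP [_ hz]].
  by rewrite hfg // -memL.
by [].
Qed.


Lemma lam_exists : exists f : X -> R, forall u, u \in Xs k ->
  m u <= f u <= C * m u /\ cost f u (f u) = mu_k u.
Proof.
have x0L : forall i, (i < size L)%N -> nth x0 L i \in Xs k.
  by move=> i hi; rewrite -memL mem_nth.
suff H : forall n, (n <= size L)%N -> exists f : X -> R, forall i, (i < n)%N ->
    m (nth x0 L i) <= f (nth x0 L i) <= C * m (nth x0 L i) /\
    cost f (nth x0 L i) (f (nth x0 L i)) = mu_k (nth x0 L i).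
  have [f hf] := H (size L) (leqnn _).
  exists f => u hu; have uL0 : u \in L by rewrite memL.
  by have := hf (index u L); rewrite index_mem uL0 nth_index //; apply.
elim => [|n IH] hn; first by exists (fun _ => 0).
have [f hf] := IH (ltnW hn).
set u := nth x0 L n.
have uX : u \in Xs k by exact: x0L.
have iu : index u L = n by apply: index_uniq => //; exact: uL.
have hproc : forall z, z \in Xs k -> (index z L < n)%N -> m z <= f z <= C * m z.
  move=> z zX zi; have zL : z \in L by rewrite memL.
  by have := (hf (index z L) zi).1; rewrite nth_index.
have hmu : 0 <= m u by exact/ltW/m_gt0.
have hC2 : 0 < C ^+ 2 by rewrite exprn_gt0 // C_gt0.
have [l hl hcost] : exists2 l, m u <= l <= C * m u & cost f u l = mu_k u.
  apply: (@ivt_hinge R X (S u) (C ^+ 2)^-1 (Xs k.+1) (Pay u) (K f u) Q (m u) (C * m u) (mu_k u)).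
  - by apply: ler_peMl => //; exact: C_ge1.
  - have mP : m u * P u = mu_k u by rewrite /m divfK // lt0r_neq0 // P_gt0.
    rewrite big1_seq ?addr0.
      by rewrite -mP ler_pM2l ?m_gt0 // S_le.
    move=> y /andP [Py yin]; have [hpy _] := near_parent yin.
    have h1 : m u <= C ^+ 2 * m (par y) by apply: pay_par => //; case/andP: Py.
    have h2 : m (par y) <= f (par y).
      have := Pay_before uX yin Py; rewrite iu => hi.
      by case/andP: (hproc _ hpy hi).
    have h3 : f (par y) <= K f u y by rewrite /K le_max lexx.
    have h4 : m u / C ^+ 2 <= K f u y.
      by rewrite ler_pdivrMr // mulrC; apply: le_trans h1 _; apply: ler_wpM2l; [exact: ltW | exact: le_trans h2 h3].
    have -> : Num.max 0 (m u / C ^+ 2 - K f u y) = 0 by apply/max_idPl; rewrite subr_le0.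
    by rewrite mul0r.
  - apply: (@le_trans _ _ (C * m u * S u)).
      have mP : m u * P u = mu_k u by rewrite /m divfK // lt0r_neq0 // P_gt0.
      by rewrite -mP -mulrA mulrCA ler_pM2l ?m_gt0 // PS.
    rewrite lerDl sumr_ge0 // => y _; rewrite mulr_ge0 ?powR_ge0 //.
    by rewrite le_max lexx.
pose f' := fun x => if x == u then l else f x.
exists f' => i hi.
have hfu : forall z, (index z L < n)%N -> f' z = f z.
  by move=> z zi; rewrite /f'; case: eqP => // E; rewrite E iu ltnn in zi.
rewrite ltnS leq_eqVlt in hi; case/orP: hi => [/eqP ->|hi].
  rewrite -/u /f' eqxx; split => //.
  rewrite -hcost; apply: (cost_ext f' f u l uX) => z zX zi.
  by apply: hfu; rewrite -iu.
have hi' : (i < size L)%N by apply: ltn_trans hi hn.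
have vX : nth x0 L i \in Xs k by exact: x0L.
have iv : index (nth x0 L i) L = i by apply: index_uniq => //; exact: uL.
have -> : f' (nth x0 L i) = f (nth x0 L i) by apply: hfu; rewrite iv.
rewrite (cost_ext f' f (nth x0 L i) _ vX); first exact: hf.
by move=> z zX zi; apply: hfu; rewrite iv in zi; exact: ltn_trans zi hi.
Qed.

Lemma main_res : exists mu_k1 : X -> R,
    [/\ pos_pmf Xs k.+1 mu_k1,
        compatible Xs parent rho p C k mu_k mu_k1,
        balanced d Xs parent rho lam a p C k.+1 mu_k1 &
        exists gamma : X -> X -> R,
          coupling_near d Xs k mu_k mu_k1
            ((1 + 2 * lam / a) * a ^- k) gamma].
Proof.
have [f hf] := lam_exists.
have hC2 : 0 < C ^+ 2 by rewrite exprn_gt0 // C_gt0.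
have hC21 : 1 <= C ^+ 2 by rewrite expr_ge1 // ?C_ge1 // ltW // C_gt0.
have fb : forall u, u \in Xs k -> m u <= f u /\ f u <= C * m u.
  by move=> u hu; have [/andP [h1 h2] _] := hf u hu.
have f_gt0 : forall u, u \in Xs k -> 0 < f u.
  by move=> u hu; apply: lt_le_trans (m_gt0 hu) (fb u hu).1.
pose r w := Num.max (f (par w)) (\big[Num.max/0]_(z <- L | Pay z w) (f z / C ^+ 2)).
have r_lo : forall w, w \in Xs k.+1 -> m (par w) <= r w.
  move=> w hw; have [hpw _] := near_parent hw.
  by apply: le_trans (fb _ hpw).1 _; rewrite /r le_max lexx.
have r_gt0 : forall w, w \in Xs k.+1 -> 0 < r w.
  move=> w hw; have [hpw _] := near_parent hw.
  exact: lt_le_trans (m_gt0 hpw) (r_lo w hw).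
have r_hi : forall w, w \in Xs k.+1 -> r w <= C * m (par w).
  move=> w hw; have [hpw _] := near_parent hw.
  rewrite /r ge_max; apply/andP; split; first exact: (fb _ hpw).2.
  apply: bigmax_le => [|z zL hz]; first by rewrite mulr_ge0 // ltW ?C_gt0 ?m_gt0.
  have zX : z \in Xs k by rewrite -memL.
  have h1 := pay_par zX hw (proj2 (andP hz)).
  exact: arA C_gt0 (fb z zX).2 h1.
have r_lip : forall v w, v \in Xs k.+1 -> w \in Xs k.+1 -> d v w < 2 * (t * e) ->
    r v <= C ^+ 2 * r w.
  move=> v w hv hw dvw; have [hpv _] := near_parent hv; have [hpw _] := near_parent hw.
  have fpw : f (par w) <= r w by rewrite /r le_max lexx.
  have mpw : m (par w) <= f (par w) := (fb _ hpw).1.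
  rewrite {1}/r ge_max; apply/andP; split.
    case: (eqVneq (par v) (par w)) => [E|NE].
      by rewrite E; apply: le_trans fpw _; apply: ler_peMl => //; exact/ltW/r_gt0.
    case hP: (Pay (par v) w).
      have : f (par v) / C ^+ 2 <= r w.
        apply: le_trans (_ : _ <= \big[Num.max/0]_(z <- L | Pay z w) (f z / C ^+ 2)) _.
          by apply: (@le_bigmax R X L (fun z => Pay z w) (fun z => f z / C ^+ 2) (par v)) => //; rewrite memL.
        by rewrite /r le_max lexx orbT.
      by rewrite ler_pdivrMr // mulrC.
    have hd := chain1 hv hw dvw.
    have hm : m (par v) <= C * m (par w).
      by move: hP; rewrite /Pay hd andbT => /negbT; rewrite -leNgt.
    apply: le_trans (fb _ hpv).2 _.
    apply: le_trans (ler_wpM2l (ltW C_gt0) hm) _; rewrite mulrA -expr2.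
    by apply: ler_wpM2l; [exact: ltW | exact: le_trans mpw fpw].
  apply: bigmax_le; first by rewrite mulr_ge0 // ltW // r_gt0.
  move=> z zL hz; have zX : z \in Xs k by rewrite -memL.
  have h1 := chain2 zX hv hw (proj2 (andP hz)) dvw.
  exact: arB C_ge1 (fb _ zX).2 h1 (ltW (m_gt0 hpw)) (le_trans mpw fpw).
pose gamma x y := if (x \in Xs k) && (y \in Xs k.+1) then
   (par y == x)%:R * (f x * Q y) +
   (if Pay x y then Num.max 0 (f x / C ^+ 2 - K f x y) * Q y else 0) else 0.
have row : forall x, x \in Xs k -> \sum_(y <- Xs k.+1) gamma x y = mu_k x.
  move=> x hx; rewrite -(hf x hx).2.
  rewrite (eq_big_seq (fun y => (par y == x)%:R * (f x * Q y) +
     (if Pay x y then Num.max 0 (f x / C ^+ 2 - K f x y) * Q y else 0))); last first.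
    by move=> y hy; rewrite /gamma hx hy.
  rewrite big_split /= -big_mkcond /cost; congr (_ + _).
  rewrite /S [in RHS]big_mkcond mulr_sumr; apply: eq_bigr => y _.
  by case: (par y == x); rewrite ?mul1r ?mul0r ?mulr0.
have pL : perm_eq L (Xs k) by rewrite /L perm_sort perm_refl.
have col : forall y, y \in Xs k.+1 -> \sum_(x <- Xs k) gamma x y = r y * Q y.
  move=> y hy; have [hpy _] := near_parent hy.
  rewrite (eq_big_seq (fun x => (par y == x)%:R * (f x * Q y) +
     (if Pay x y then Num.max 0 (f x / C ^+ 2 - K f x y) * Q y else 0))); last first.
    by move=> x hx; rewrite /gamma hx hy.
  rewrite big_split /= sum_pick ?Huniq // -big_mkcond -(perm_big _ pL) -mulr_suml.
  have T := @telescope R X L (fun z => Pay z y) (fun z => f z / C ^+ 2) (f (par y)) uL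
    (ltW (f_gt0 _ hpy)).
  have -> : \sum_(i <- L | Pay i y) Num.max 0 (f i / C ^+ 2 - K f i y) = r y - f (par y).
    exact: T.
  by rewrite mulrBl; ring.
pose mu1 w := r w * Q w.
have Emu : forall w, w \in Xs k.+1 -> mu1 w / powR (pi_ parent rho w k.+1) p = r w.
  by move=> w hw; rewrite /mu1 mulfK // lt0r_neq0 // Q_gt0.
have mu1_gt0 : forall w, w \in Xs k.+1 -> 0 < mu1 w.
  by move=> w hw; rewrite /mu1 mulr_gt0 ?r_gt0 ?Q_gt0.
exists mu1; split.
- split => //.
  transitivity (\sum_(w <- Xs k.+1) \sum_(x <- Xs k) gamma x w).
    by apply: eq_big_seq => w hw; rewrite col.
  rewrite exchange_big.
  transitivity (\sum_(x <- Xs k) mu_k x); last by case: Hpmf.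
  by apply: eq_big_seq => x hx; rewrite row.
- split => //; first by case: Hpmf.
  move=> v hv; cbv zeta; rewrite Emu //; apply/andP; split.
    exact: r_lo.
  exact: r_hi.
- split => //.
  move=> u v hu hv [_ [_ _ hE]].
  case: hE => [[E _]|[E _]|[_ _ [z [h1 h2]]]].
  + by move: E => /= /eqP; rewrite eqSS ltn_eqF.
  + by move: E => /= /eqP; rewrite eqSS ltn_eqF.
  + rewrite Emu // Emu //; apply: r_lip => //.
    move: h1 h2; rewrite /= lam_e1 => h1 h2.
    apply: le_lt_trans (dtri u z v) _; rewrite (dsym z v) mulr2n mulrDl mul1r.
    by rewrite ltrD.
- exists gamma; split.
  + move=> x y; rewrite /gamma; case: ifP => // /andP [hx hy].
    apply: addr_ge0; first by rewrite mulr_ge0 ?ler0n // mulr_ge0 ?powR_ge0 // ltW ?f_gt0.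
    case: ifP => _ //; by rewrite mulr_ge0 ?powR_ge0 // le_max lexx.
  + move=> x y; rewrite /gamma; case: ifP => [/andP [-> ->] //|_]; by rewrite eqxx.
  + exact: row.
  + exact: col.
  + move=> x y; rewrite /gamma; case: ifP => [/andP [hx hy]|_]; last by rewrite eqxx.
    change ((1 + 2 * lam / a) * a ^- k) with Bd.
    case: (eqVneq (par y) x) => [E _|NE hne].
      have [_ dy] := near_parent hy.
      rewrite -E dsym; apply: lt_le_trans dy _.
      by rewrite Bd_eq lerDl mulr_ge0 // mulr_ge0 // ltW ?t_gt0 ?e_gt0.
    case hP: (Pay x y); first by case/andP: hP.
    by move: hne; rewrite hP mul0r add0r eqxx.
Qed.

End Main.

Theorem lemma3p11 (R : realType) (X : eqType) (d : X -> X -> R)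
  (a lam : R) (x0 : X) (Xs : nat -> seq X) (parent : X -> nat -> X)
  (rho : X -> nat -> R) (eta_m eta_p p C : R) (k : nat) (mu_k : X -> R) :
  is_metric d -> d_compact d -> d_doubling d -> diam_eq d (2^-1) ->
  6 <= lam -> lam <= a ->
  hyperbolic_filling d a x0 Xs parent ->
  (* rho : S -> (0,oo) *)
  (forall n x, x \in Xs n -> 0 < rho x n) ->
  (* (H1) *)
  0 < eta_m -> eta_m <= eta_p -> eta_p < 1 ->
  (forall n x, x \in Xs n -> eta_m <= rho x n <= eta_p) ->
  (* (H4) *)
  (forall m n y, (m < n)%N -> y \in Xs m ->
     \sum_(w <- Xs n | descendant parent w n y m)
        powR (pi_ parent rho w n) p <= powR (pi_ parent rho y m) p) ->
  powR eta_m (- p) <= C ->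
  pos_pmf Xs k mu_k ->
  balanced d Xs parent rho lam a p C k mu_k ->
  exists mu_k1 : X -> R,
    [/\ pos_pmf Xs k.+1 mu_k1,
        compatible Xs parent rho p C k mu_k mu_k1,
        balanced d Xs parent rho lam a p C k.+1 mu_k1 &
        exists gamma : X -> X -> R,
          coupling_near d Xs k mu_k mu_k1
            ((1 + 2 * lam / a) * a ^- k) gamma].
Proof.
move=> Hmet _ _ _ Hlam6 Hlama Hhf Hrho Hem _ Hep1 Hbnd H4 HC Hpmf Hbal.
by eapply main_res; eassumption.
Qed.
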